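(* Let $\mathscr V,\mathscr W$ be monoidal categories and $\mathscr C$ a $\mathscr V$-$\mathscr W$-bigraded category. (1) For every left $\mathscr V$-graded category $\mathscr A$, there is a right $\mathscr W$-graded category ${}^{\mathscr V}[\mathscr A,\mathscr C]_{\mathscr W}$ whose objects are the left $\mathscr V$-graded functors $\mathscr A\to{}_{\mathscr V}\mathscr C$, whose graded morphisms of grade $X'$ from $F$ to $G$ are the graded transformations $\phi\colon F\,'\,X'\Rightarrow G$, with composition and reindexing defined pointwise in $\mathscr C_{\mathscr W}$ (i.e. $(\psi\circ\phi)_A=\psi_A\circ\phi_A$ and $(\beta^*\phi)_A=\beta^*(\phi_A)$ in $\mathscr C_{\mathscr W}$) and identities $(\mathsf i_{FA})_A$. (2) Dually, for every right $\mathscr W$-graded category $\mathscr B$, there is a left $\mathscr V$-graded category ${}_{\mathscr V}[\mathscr B,\mathscr C]^{\mathscr W}$ whose objects are right $\mathscr W$-graded functors $\mathscr B\to\mathscr C_{\mathscr W}$, whose grade-$X$ morphisms $F\to G$ are families $\phi_B\in\mathscr C_{(X,I)}(FB,GB)$ ($B\in\mathrm{ob}\,\mathscr B$) such that for every $g\in\mathscr B_{X'}(B,B')$, $(\phi_B,\phi_{B'},Fg,Gg)$ is an $(X,X')$-bigraded square, with pointwise composition and reindexing in ${}_{\mathscr V}\mathscr C$.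
   Context: $\mathscr V,\mathscr W$ monoidal (structure $\otimes,I,a,\ell,r$); $\mathscr W^{\mathrm{rev}}$ has $X\otimes_{\mathrm{rev}}Y=Y\otimes X$. For a monoidal $\mathscr U$, a left $\mathscr U$-graded category has objects, sets $\mathscr C_X(A,B)$, reindexings $\alpha^*f\in\mathscr C_Y(A,B)$ along $\alpha\colon Y\to X$, composites $g\circ f\in\mathscr C_{Y\otimes X}(A,C)$, identities $\mathsf i_A\in\mathscr C_I(A,A)$, with functorial reindexing, $\beta^*g\circ\alpha^*f=(\beta\otimes\alpha)^*(g\circ f)$, $(h\circ g)\circ f=a^*(h\circ(g\circ f))$, $f\circ\mathsf i_A=r_X^*f$, $\mathsf i_B\circ f=\ell_X^*f$; graded functors preserve all this. A right $\mathscr W$-graded category is a left $\mathscr W^{\mathrm{rev}}$-graded one (composite of grades $X'$ then $Y'$ has grade $X'\otimes Y'$). A $\mathscr V$-$\mathscr W$-bigraded category $\mathscr C$ is a left $(\mathscr V\times\mathscr W^{\mathrm{rev}})$-graded category: sets $\mathscr C_{(X,X')}(A,B)$, $g\circ f\in\mathscr C_{(Y\otimes X,X'\otimes Y')}$. Its underlying left $\mathscr V$-graded ${}_{\mathscr V}\mathscr C$: $\mathscr C_{(X,I)}(A,B)$, reindexing $(\alpha,1_I)^*$, composition $(1,\ell_I^{-1})^*(g\circ f)$, identities $\mathsf i_A$; underlying right $\mathscr W$-graded $\mathscr C_{\mathscr W}$: $\mathscr C_{(I,X')}(A,B)$, reindexing $(1_I,\beta)^*$, composition $(\ell_I^{-1},1)^*(\psi\circ\varphi)$,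 identities $\mathsf i_A$. An $(X,X')$-bigraded square is $(f,g,\varphi,\varphi')$ with $f\in\mathscr C_{(X,I)}(A,A')$, $g\in\mathscr C_{(X,I)}(B,B')$, $\varphi\in\mathscr C_{(I,X')}(A,B)$, $\varphi'\in\mathscr C_{(I,X')}(A',B')$ and $(r_X^{-1},r_{X'}^{-1})^*(g\circ\varphi)=(\ell_X^{-1},\ell_{X'}^{-1})^*(\varphi'\circ f)$. For left $\mathscr V$-graded functors $F,G\colon\mathscr A\to{}_{\mathscr V}\mathscr C$ and $X'\in\mathscr W$, a graded transformation $\phi\colon F\,'\,X'\Rightarrow G$ is a family $\phi_A\in\mathscr C_{(I,X')}(FA,GA)$ such that $(Ff,Gf,\phi_A,\phi_B)$ is an $(X,X')$-bigraded square for every $f\in\mathscr A_X(A,B)$. *)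

(* Defs.v *)
Set Implicit Arguments.
Unset Strict Implicit.

Record MonData := {
  mob : Type;
  mhom : mob -> mob -> Type;
  mid : forall X, mhom X X;
  mcomp : forall X Y Z, mhom Y Z -> mhom X Y -> mhom X Z;
  mtens : mob -> mob -> mob;
  mtensm : forall X X' Y Y', mhom X X' -> mhom Y Y' -> mhom (mtens X Y) (mtens X' Y');
  munit : mob;
  massoc : forall X Y Z, mhom (mtens (mtens X Y) Z) (mtens X (mtens Y Z));
  massoc_inv : forall X Y Z, mhom (mtens X (mtens Y Z)) (mtens (mtens X Y) Z);
  mlu : forall X, mhom (mtens munit X) X;
  mlu_inv : forall X, mhom X (mtens munit X);
  mru : forall X, mhom (mtens X munit) X;
  mru_inv : forall X, mhom X (mtens X munit)
}.

Arguments mhom {m}.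
Arguments mid {m}.
Arguments mcomp {m X Y Z}.
Arguments mtens {m}.
Arguments mtensm {m X X' Y Y'}.
Arguments munit {m}.
Arguments massoc {m}.
Arguments massoc_inv {m}.
Arguments mlu {m}.
Arguments mlu_inv {m}.
Arguments mru {m}.
Arguments mru_inv {m}.

Record MonLaws (M : MonData) : Prop := {
  mcomp_id_l : forall (X Y : mob M) (f : mhom X Y), mcomp (mid Y) f = f;
  mcomp_id_r : forall (X Y : mob M) (f : mhom X Y), mcomp f (mid X) = f;
  mcomp_assoc : forall (X Y Z T : mob M) (f : mhom X Y) (g : mhom Y Z) (h : mhom Z T),
      mcomp h (mcomp g f) = mcomp (mcomp h g) f;
  mtensm_id : forall (X Y : mob M), mtensm (mid X) (mid Y) = mid (mtens X Y);
  mtensm_comp : forall (X X' X'' Y Y' Y'' : mob M)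
      (f : mhom X X') (f' : mhom X' X'') (g : mhom Y Y') (g' : mhom Y' Y''),
      mtensm (mcomp f' f) (mcomp g' g) = mcomp (mtensm f' g') (mtensm f g);
  massoc_iso1 : forall (X Y Z : mob M), mcomp (massoc_inv X Y Z) (massoc X Y Z) = mid _;
  massoc_iso2 : forall (X Y Z : mob M), mcomp (massoc X Y Z) (massoc_inv X Y Z) = mid _;
  mlu_iso1 : forall (X : mob M), mcomp (mlu_inv X) (mlu X) = mid _;
  mlu_iso2 : forall (X : mob M), mcomp (mlu X) (mlu_inv X) = mid _;
  mru_iso1 : forall (X : mob M), mcomp (mru_inv X) (mru X) = mid _;
  mru_iso2 : forall (X : mob M), mcomp (mru X) (mru_inv X) = mid _;
  massoc_nat : forall (X X' Y Y' Z Z' : mob M) (f : mhom X X') (g : mhom Y Y') (h : mhom Z Z'),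
      mcomp (massoc X' Y' Z') (mtensm (mtensm f g) h)
      = mcomp (mtensm f (mtensm g h)) (massoc X Y Z);
  mlu_nat : forall (X X' : mob M) (f : mhom X X'),
      mcomp (mlu X') (mtensm (mid (@munit M)) f) = mcomp f (mlu X);
  mru_nat : forall (X X' : mob M) (f : mhom X X'),
      mcomp (mru X') (mtensm f (mid (@munit M))) = mcomp f (mru X);
  mpentagon : forall (X Y Z T : mob M),
      mcomp (massoc X Y (mtens Z T)) (massoc (mtens X Y) Z T)
      = mcomp (mtensm (mid X) (massoc Y Z T))
          (mcomp (massoc X (mtens Y Z) T) (mtensm (massoc X Y Z) (mid T)));
  mtriangle : forall (X Y : mob M),
      mcomp (mtensm (mid X) (mlu Y)) (massoc X (@munit M) Y) = mtensm (mru X) (mid Y)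
}.

Definition rev (W : MonData) : MonData := {|
  mob := mob W;
  mhom := @mhom W;
  mid := @mid W;
  mcomp := @mcomp W;
  mtens := fun X Y => mtens Y X;
  mtensm := fun X X' Y Y' f g => mtensm g f;
  munit := munit;
  massoc := fun X Y Z => massoc_inv Z Y X;
  massoc_inv := fun X Y Z => massoc Z Y X;
  mlu := fun X => mru X;
  mlu_inv := fun X => mru_inv X;
  mru := fun X => mlu X;
  mru_inv := fun X => mlu_inv X
|}.

Definition prodM (V W : MonData) : MonData := {|
  mob := (mob V * mob W)%type;
  mhom := fun p q => (mhom (fst p) (fst q) * mhom (snd p) (snd q))%type;
  mid := fun p => (mid (fst p), mid (snd p));
  mcomp := fun p q r g f => (mcomp (fst g) (fst f), mcomp (snd g) (snd f));
  mtens := fun p q => (mtens (fst p) (fst q), mtens (snd p) (snd q));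
  mtensm := fun p p' q q' f g => (mtensm (fst f) (fst g), mtensm (snd f) (snd g));
  munit := (munit, munit);
  massoc := fun p q r => (massoc (fst p) (fst q) (fst r), massoc (snd p) (snd q) (snd r));
  massoc_inv := fun p q r => (massoc_inv (fst p) (fst q) (fst r), massoc_inv (snd p) (snd q) (snd r));
  mlu := fun p => (mlu (fst p), mlu (snd p));
  mlu_inv := fun p => (mlu_inv (fst p), mlu_inv (snd p));
  mru := fun p => (mru (fst p), mru (snd p));
  mru_inv := fun p => (mru_inv (fst p), mru_inv (snd p))
|}.

Record GStruct (M : MonData) (O : Type) (H : mob M -> O -> O -> Type) := {
  sreind : forall X Y (alpha : mhom Y X) A B, H X A B -> H Y A B;
  scomp : forall X Y A B C, H Y B C -> H X A B -> H (mtens Y X) A C;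
  sid : forall A, H munit A A
}.
Arguments GStruct : clear implicits.


Record GStructLaws (M : MonData) (O : Type) (H : mob M -> O -> O -> Type)
    (s : GStruct M O H) : Prop := {
  reind_id : forall X A B (f : H X A B), sreind s (mid X) f = f;
  reind_comp : forall X Y Z (alpha : mhom Y X) (beta : mhom Z Y) A B (f : H X A B),
      sreind s (mcomp alpha beta) f = sreind s beta (sreind s alpha f);
  comp_reind : forall X X' Y Y' (alpha : mhom X' X) (beta : mhom Y' Y) A B C
      (f : H X A B) (g : H Y B C),
      scomp s (sreind s beta g) (sreind s alpha f) = sreind s (mtensm beta alpha) (scomp s g f);
  comp_assoc : forall X Y Z A B C D (f : H X A B) (g : H Y B C) (h : H Z C D),
      scomp s (scomp s h g) f = sreind s (massoc Z Y X) (scomp s h (scomp s g f));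
  comp_id_r : forall X A B (f : H X A B), scomp s f (sid s A) = sreind s (mru X) f;
  comp_id_l : forall X A B (f : H X A B), scomp s (sid s B) f = sreind s (mlu X) f
}.

Record GData (M : MonData) := {
  gob : Type;
  ghom : mob M -> gob -> gob -> Type;
  gstr : GStruct M gob ghom
}.

Arguments gob {M}.
Arguments ghom {M} g X.

Definition greind {M} (D : GData M) {X Y} (alpha : mhom Y X) {A B} (f : ghom D X A B)
  : ghom D Y A B := sreind (gstr D) alpha f.
Definition gcomp {M} (D : GData M) {X Y A B C} (g : ghom D Y B C) (f : ghom D X A B)
  : ghom D (mtens Y X) A C := scomp (gstr D) g f.
Definition gid {M} (D : GData M) (A : gob D) : ghom D munit A A := sid (gstr D) A.

Arguments greind {M} D {X Y} alpha {A B} f.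
Arguments gcomp {M} D {X Y A B C} g f.
Arguments gid {M} D A.

Definition GLaws {M} (D : GData M) : Prop := GStructLaws (gstr D).

(* Right W-graded category = left W^rev-graded category;
   V-W-bigraded category = left (V × W^rev)-graded category. *)

Record GFun {M} (D E : GData M) := {
  fob : gob D -> gob E;
  fhom : forall X A B, ghom D X A B -> ghom E X (fob A) (fob B);
  fun_reind : forall X Y (alpha : mhom Y X) A B (f : ghom D X A B),
      fhom (greind D alpha f) = greind E alpha (fhom f);
  fun_comp : forall X Y A B C (f : ghom D X A B) (g : ghom D Y B C),
      fhom (gcomp D g f) = gcomp E (fhom g) (fhom f);
  fun_id : forall A, fhom (gid D A) = gid E (fob A)
}.

Arguments fob {M D E} _ _.
Arguments fhom {M D E} _ {X A B} _.

Section Underlying.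
Variables (V W : MonData) (C : GData (prodM V (rev W))).

Definition underL : GData V := {|
  gob := gob C;
  ghom := fun X A B => ghom C (X, @munit W) A B;
  gstr := {|
    sreind := fun X Y alpha A B f => greind C ((alpha, mid (@munit W)) : mhom (m := prodM V (rev W)) (Y, munit) (X, munit)) f;
    scomp := fun X Y A B D g f =>
      greind C ((mid (mtens Y X), mlu_inv (@munit W)) : mhom (m := prodM V (rev W)) (mtens Y X, munit) (mtens Y X, mtens munit munit)) (gcomp C g f);
    sid := fun A => gid C A |} |}.

Definition underR : GData (rev W) := {|
  gob := gob C;
  ghom := fun X' A B => ghom C (@munit V, X') A B;
  gstr := {|
    sreind := fun X Y beta A B f => greind C ((mid (@munit V), beta) : mhom (m := prodM V (rev W)) (munit, Y) (munit, X)) f;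
    scomp := fun X Y A B D g f =>
      greind C ((mlu_inv (@munit V), mid (mtens (m := rev W) Y X)) : mhom (m := prodM V (rev W)) (munit, mtens (m := rev W) Y X) (mtens munit munit, mtens (m := rev W) Y X)) (gcomp C g f);
    sid := fun A => gid C A |} |}.

Definition bisquare (X : mob V) (X' : mob W) (A A' B B' : gob C)
    (f : ghom C (X, munit) A A') (g : ghom C (X, munit) B B')
    (phi : ghom C (munit, X') A B) (phi' : ghom C (munit, X') A' B') : Prop :=
  greind C ((mru_inv X, mru_inv X') : mhom (m := prodM V (rev W)) (X, X') (mtens (m := prodM V (rev W)) (X, munit) (munit, X'))) (gcomp C g phi)
  = greind C ((mlu_inv X, mlu_inv X') : mhom (m := prodM V (rev W)) (X, X') (mtens (m := prodM V (rev W)) (munit, X') (X, munit))) (gcomp C phi' f).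

Definition GTrans (A : GData V) (F G : GFun A underL) (X' : mob W) : Type :=
  { phi : forall a : gob A, ghom C (@munit V, X') (fob F a) (fob G a) |
    forall X (a b : gob A) (f : ghom A X a b),
      bisquare (fhom F f) (fhom G f) (phi a) (phi b) }.

Definition GTransR (B : GData (rev W)) (F G : GFun B underR) (X : mob V) : Type :=
  { phi : forall b : gob B, ghom C (X, @munit W) (fob F b) (fob G b) |
    forall X' (b b' : gob B) (g : ghom B X' b b'),
      bisquare (phi b) (phi b') (fhom F g) (fhom G g) }.

End Underlying.

Arguments underL {V W} C.
Arguments underR {V W} C.
Arguments GTrans {V W} C A F G X'.
Arguments GTransR {V W} C B F G X.

(* Main.v *)
Require Import Defs.
From Stdlib Require Import Setoid FunctionalExtensionality ProofIrrelevance.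
Set Implicit Arguments.


Section Mon.
Variable M : MonData.
Hypothesis L : MonLaws M.

Lemma cid_l {X Y : mob M} (f : mhom X Y) : mcomp (mid Y) f = f.
Proof. apply (mcomp_id_l L). Qed.
Lemma cid_r {X Y : mob M} (f : mhom X Y) : mcomp f (mid X) = f.
Proof. apply (mcomp_id_r L). Qed.
Lemma cA {X Y Z T : mob M} (f : mhom X Y) (g : mhom Y Z) (h : mhom Z T) :
  mcomp h (mcomp g f) = mcomp (mcomp h g) f.
Proof. apply (mcomp_assoc L). Qed.
Lemma tid {X Y : mob M} : mtensm (mid X) (mid Y) = mid (mtens X Y).
Proof. apply (mtensm_id L). Qed.
Lemma tc {X X' X'' Y Y' Y'' : mob M}
      (f : mhom X X') (f' : mhom X' X'') (g : mhom Y Y') (g' : mhom Y' Y'') :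
      mtensm (mcomp f' f) (mcomp g' g) = mcomp (mtensm f' g') (mtensm f g).
Proof. apply (mtensm_comp L). Qed.

Lemma tcl {X X' X'' Y : mob M} (f : mhom X X') (f' : mhom X' X'') :
  mtensm (mcomp f' f) (mid Y) = mcomp (mtensm f' (mid Y)) (mtensm f (mid Y)).
Proof. rewrite <- tc, cid_l. reflexivity. Qed.
Lemma tcr {X X' X'' Y : mob M} (f : mhom X X') (f' : mhom X' X'') :
  mtensm (mid Y) (mcomp f' f) = mcomp (mtensm (mid Y) f') (mtensm (mid Y) f).
Proof. rewrite <- tc, cid_l. reflexivity. Qed.

Lemma can {X Y Z : mob M} (f : mhom X Y) (g : mhom Y X) (h : mhom Z X) :
  mcomp g f = mid X -> mcomp g (mcomp f h) = h.
Proof. intros H. rewrite cA, H, cid_l. reflexivity. Qed.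

Lemma epi {X Y Z : mob M} (a : mhom X Y) (a' : mhom Y X) (f g : mhom Y Z) :
  mcomp a a' = mid Y -> mcomp f a = mcomp g a -> f = g.
Proof.
  intros H1 H2. rewrite <- (cid_r f), <- (cid_r g), <- H1, !cA, H2. reflexivity.
Qed.
Lemma mono {X Y Z : mob M} (a : mhom Y Z) (a' : mhom Z Y) (f g : mhom X Y) :
  mcomp a' a = mid Y -> mcomp a f = mcomp a g -> f = g.
Proof.
  intros H1 H2. rewrite <- (cid_l f), <- (cid_l g), <- H1, <- !cA, H2. reflexivity.
Qed.

Lemma tr_faith {X Y : mob M} (f g : mhom X Y) :
  mtensm f (mid munit) = mtensm g (mid munit) -> f = g.
Proof.
  intros H. eapply epi; [apply (mru_iso2 L X)|].
  rewrite <- !(mru_nat L), H. reflexivity.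
Qed.
Lemma tl_faith {X Y : mob M} (f g : mhom X Y) :
  mtensm (mid munit) f = mtensm (mid munit) g -> f = g.
Proof.
  intros H. eapply epi; [apply (mlu_iso2 L X)|].
  rewrite <- !(mlu_nat L), H. reflexivity.
Qed.

Lemma ru_inv_nat {X X' : mob M} (f : mhom X X') :
  mcomp (mru_inv X') f = mcomp (mtensm f (mid munit)) (mru_inv X).
Proof.
  eapply mono; [apply (mru_iso1 L)|].
  rewrite !cA, (mru_iso2 L), cid_l, (mru_nat L), <- cA, (mru_iso2 L), cid_r. reflexivity.
Qed.
Lemma lu_inv_nat {X X' : mob M} (f : mhom X X') :
  mcomp (mlu_inv X') f = mcomp (mtensm (mid munit) f) (mlu_inv X).
Proof.
  eapply mono; [apply (mlu_iso1 L)|].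
  rewrite !cA, (mlu_iso2 L), cid_l, (mlu_nat L), <- cA, (mlu_iso2 L), cid_r. reflexivity.
Qed.

Lemma K1 (X Y : mob M) :
  mcomp (mlu (mtens X Y)) (massoc munit X Y) = mtensm (mlu X) (mid Y).
Proof.
  apply tl_faith.
  set (Q := mcomp (massoc munit (mtens munit X) Y) (mtensm (massoc munit munit X) (mid Y))).
  set (Q' := mcomp (mtensm (massoc_inv munit munit X) (mid Y)) (massoc_inv munit (mtens munit X) Y)).
  assert (HQ : mcomp Q Q' = mid _).
  { unfold Q, Q'. rewrite <- cA, (cA _ (mtensm _ _) (mtensm _ _)), <- tc, (massoc_iso2 L), cid_l, tid, cid_l.
    apply (massoc_iso2 L). }
  eapply epi; [apply HQ|].
  transitivity (mcomp (mtensm (mid munit) (mlu (mtens X Y)))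
                  (mcomp (massoc munit munit (mtens X Y)) (massoc (mtens munit munit) X Y))).
  { unfold Q. rewrite (mpentagon L). rewrite <- (cid_l (mid munit)) at 1.
    rewrite tc, <- !cA. reflexivity. }
  rewrite cA, (mtriangle L), <- tid, <- (massoc_nat L).
  rewrite <- (mtriangle L).
  rewrite <- (cid_l (mid Y)) at 1. rewrite tc, cA.
  rewrite (massoc_nat L). unfold Q. rewrite !cA. reflexivity.
Qed.

Lemma K2 (X Y : mob M) :
  mcomp (mtensm (mid X) (mru Y)) (massoc X Y munit) = mru (mtens X Y).
Proof.
  set (Q := mcomp (massoc X (mtens Y munit) munit) (mtensm (massoc X Y munit) (mid munit))).
  assert (HQ : forall f g : mhom (mtens (mtens X Y) munit) (mtens X Y),
     mcomp (massoc X Y munit) (mtensm f (mid munit)) = mcomp (massoc X Y munit) (mtensm g (mid munit)) -> f = g).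
  { intros f g H. apply tr_faith. eapply mono; [apply (massoc_iso1 L)|]. exact H. }
  apply HQ.
  rewrite tcl, cA, (massoc_nat L), <- cA.
  rewrite <- (mtriangle L), tcr, <- cA. rewrite <- (mpentagon L).
  rewrite cA, <- (massoc_nat L), <- cA, tid, (mtriangle L). reflexivity.
Qed.

Lemma K3 : mlu (@munit M) = mru munit.
Proof.
  apply tr_faith. rewrite <- K1, <- (mtriangle L). f_equal.
  eapply mono; [apply (mlu_iso1 L)|].
  rewrite (mlu_nat L). reflexivity.
Qed.


Lemma K3inv : mlu_inv (@munit M) = mru_inv munit.
Proof.
  eapply mono; [apply (mlu_iso1 L)|]. rewrite (mlu_iso2 L), K3, (mru_iso2 L). reflexivity.
Qed.

Lemma tri_inv (X Y : mob M) :
  mcomp (mtensm (mru X) (mid Y)) (massoc_inv X munit Y) = mtensm (mid X) (mlu Y).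
Proof. rewrite <- (mtriangle L), <- cA, (massoc_iso2 L), cid_r. reflexivity. Qed.

Lemma tri_inv2 (X Y : mob M) :
  mcomp (massoc_inv X munit Y) (mtensm (mid X) (mlu_inv Y)) = mtensm (mru_inv X) (mid Y).
Proof.
  apply (mono (mtensm (mru X) (mid Y)) (mtensm (mru_inv X) (mid Y))).
  - rewrite <- tc, (mru_iso1 L), cid_l, tid. reflexivity.
  - rewrite cA, tri_inv, <- !tc, (mru_iso2 L), (mlu_iso2 L), !cid_l, !tid. reflexivity.
Qed.

Lemma K1inv (X Y : mob M) :
  mcomp (massoc munit X Y) (mtensm (mlu_inv X) (mid Y)) = mlu_inv (mtens X Y).
Proof.
  apply (mono (mlu (mtens X Y)) (mlu_inv (mtens X Y))); [apply (mlu_iso1 L)|].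
  rewrite cA, K1, <- tc, (mlu_iso2 L), (mlu_iso2 L), cid_l, tid. reflexivity.
Qed.

Lemma VC1 (X : mob M) :
  mcomp (massoc_inv munit munit X)
    (mcomp (mtensm (mid munit) (mcomp (mlu_inv X) (mru X)))
       (mcomp (massoc munit X munit)
          (mcomp (mtensm (mcomp (mlu_inv X) (mru X)) (mid munit))
             (mcomp (massoc_inv X munit munit)
                (mcomp (mtensm (mid X) (mlu_inv munit)) (mru_inv X)))))) =
  mcomp (mtensm (mlu_inv munit) (mid X)) (mlu_inv X).
Proof.
  rewrite tcl, <- cA, (cA _ (massoc_inv X munit munit)), tri_inv, (cA _ (mtensm (mid X) (mlu_inv munit))), <- tc, (mlu_iso2 L), cid_l, tid, cid_l.
  rewrite <- ru_inv_nat, tcr, <- cA, (cA _ (massoc munit X munit)), K2, (cA _ (mru_inv _)), (mru_iso2 L), cid_l.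
  rewrite cA, tri_inv2, K3inv. reflexivity.
Qed.

Lemma WC1 (X Y : mob M) :
  mcomp (massoc munit X Y)
    (mcomp (mtensm (mcomp (mlu_inv X) (mru X)) (mid Y))
       (mcomp (massoc_inv X munit Y)
          (mcomp (mtensm (mid X) (mcomp (mlu_inv Y) (mru Y)))
             (mcomp (massoc X Y munit)
                (mcomp (mtensm (mid (mtens X Y)) (mid munit))
                   (mru_inv (mtens X Y))))))) =
  mcomp (mtensm (mid munit) (mid (mtens X Y))) (mlu_inv (mtens X Y)).
Proof.
  rewrite !tid, !cid_l, tcr, <- cA, (cA _ (massoc X Y munit)), K2, (mru_iso2 L), cid_r.
  rewrite tcl, <- cA, (cA _ (massoc_inv X munit Y)), tri_inv, <- tc, (mlu_iso2 L), cid_l, tid, cid_r.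
  apply K1inv.
Qed.
End Mon.


Section RevL.
Variable W : MonData.
Hypothesis L : MonLaws W.

Lemma ainv_nat (X X' Y Y' Z Z' : mob W) (f : mhom X X') (g : mhom Y Y') (h : mhom Z Z') :
  mcomp (massoc_inv X' Y' Z') (mtensm f (mtensm g h))
  = mcomp (mtensm (mtensm f g) h) (massoc_inv X Y Z).
Proof.
  eapply (mono L); [apply (massoc_iso1 L)|].
  eapply (epi L); [apply (massoc_iso2 L)|].
  rewrite !(cA L), (massoc_iso2 L), (cid_l L), <- !(cA L), (massoc_iso1 L), (cid_r L).
  rewrite (massoc_nat L). reflexivity.
Qed.

Lemma revL : MonLaws (rev W).
Proof.
  pose proof L as L'.
  destruct L' as [a1 a2 a3 a4 a5 a6 a7 a8 a9 a10 a11 a12 a13 a14 a15 a16].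
  constructor; simpl; intros; auto.
  - apply ainv_nat.
  -
    set (p := mcomp (massoc T Z (mtens Y X)) (massoc (mtens T Z) Y X)).
    apply (epi L p (mcomp (massoc_inv (mtens T Z) Y X) (massoc_inv T Z (mtens Y X)))).
    + unfold p. rewrite <- (cA L), (cA L (massoc_inv T Z (mtens Y X)) (massoc_inv (mtens T Z) Y X)), (massoc_iso2 L), (cid_l L), (massoc_iso2 L). reflexivity.
    + unfold p at 1. rewrite <- (cA L), (cA L (massoc (mtens T Z) Y X) (massoc T Z (mtens Y X))), (massoc_iso1 L), (cid_l L), (massoc_iso1 L).
      unfold p. rewrite (mpentagon L).
      rewrite <- !(cA L).
      rewrite (can L (mtensm (mid T) (massoc Z Y X))).
      2:{ rewrite <- (tc L), (cid_l L), (massoc_iso1 L), (tid L). reflexivity. }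
      rewrite (can L (massoc T (mtens Z Y) X)) by apply (massoc_iso1 L).
      rewrite <- (tc L), (cid_l L), (massoc_iso1 L), (tid L). reflexivity.
  - rewrite <- (mtriangle L), <- (cA L), (massoc_iso2 L), (cid_r L). reflexivity.
Qed.
End RevL.

Section ProdL.
Variables V W : MonData.
Hypotheses (LV : MonLaws V) (LW : MonLaws W).
Lemma prodL : MonLaws (prodM V W).
Proof.
  destruct LV, LW. constructor; intros; simpl in *;
  repeat match goal with p : prod _ _ |- _ => destruct p end; simpl in *; f_equal; auto.
Qed.
End ProdL.


Section G.
Variable M : MonData.
Hypothesis L : MonLaws M.
Variable D : GData M.
Hypothesis hD : GLaws D.

Lemma rr {X Y Z : mob M} (a : mhom Y X) (b : mhom Z Y) {A B} (f : ghom D X A B) :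
  greind D b (greind D a f) = greind D (mcomp a b) f.
Proof. symmetry. apply (reind_comp hD). Qed.
Lemma rid {X : mob M} {A B} (f : ghom D X A B) : greind D (mid X) f = f.
Proof. apply (reind_id hD). Qed.
Lemma crl {X Y Y' : mob M} (b : mhom Y' Y) {A B C'} (f : ghom D X A B) (g : ghom D Y B C') :
  gcomp D (greind D b g) f = greind D (mtensm b (mid X)) (gcomp D g f).
Proof. unfold greind, gcomp. rewrite <- (comp_reind hD), (reind_id hD). reflexivity. Qed.
Lemma crr {X X' Y : mob M} (a : mhom X' X) {A B C'} (f : ghom D X A B) (g : ghom D Y B C') :
  gcomp D g (greind D a f) = greind D (mtensm (mid Y) a) (gcomp D g f).
Proof. unfold greind, gcomp. rewrite <- (comp_reind hD), (reind_id hD). reflexivity. Qed.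
Lemma cas {X Y Z : mob M} {A B C' E} (f : ghom D X A B) (g : ghom D Y B C') (h : ghom D Z C' E) :
  gcomp D (gcomp D h g) f = greind D (massoc Z Y X) (gcomp D h (gcomp D g f)).
Proof. apply (comp_assoc hD). Qed.
Lemma cas' {X Y Z : mob M} {A B C' E} (f : ghom D X A B) (g : ghom D Y B C') (h : ghom D Z C' E) :
  gcomp D h (gcomp D g f) = greind D (massoc_inv Z Y X) (gcomp D (gcomp D h g) f).
Proof. rewrite cas, rr, (massoc_iso2 L), rid. reflexivity. Qed.
Lemma cidr {X : mob M} {A B} (f : ghom D X A B) : gcomp D f (gid D A) = greind D (mru X) f.
Proof. apply (comp_id_r hD). Qed.
Lemma cidl {X : mob M} {A B} (f : ghom D X A B) : gcomp D (gid D B) f = greind D (mlu X) f.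
Proof. apply (comp_id_l hD). Qed.
Lemma rmove {X Y Z : mob M} (a : mhom Y X) (a' : mhom X Y) (b : mhom Y Z) {A B}
  (x : ghom D X A B) (y : ghom D Z A B) :
  greind D a x = greind D b y -> mcomp a a' = mid X -> x = greind D (mcomp b a') y.
Proof.
  intros H1 H2. rewrite <- (rid x), <- H2, <- rr, H1, rr. reflexivity.
Qed.
Lemma req {X Y : mob M} (a b : mhom Y X) {A B} (x : ghom D X A B) :
  a = b -> greind D a x = greind D b x.
Proof. intros ->. reflexivity. Qed.
Lemma fin_cas {X Y Z W0 : mob M} {A B C' E} (f : ghom D X A B) (g : ghom D Y B C') (h : ghom D Z C' E)
  (m1 : mhom W0 (mtens (mtens Z Y) X)) (m2 : mhom W0 (mtens Z (mtens Y X))) :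
  mcomp (massoc Z Y X) m1 = m2 ->
  greind D m1 (gcomp D (gcomp D h g) f) = greind D m2 (gcomp D h (gcomp D g f)).
Proof. intros <-. rewrite cas, rr. reflexivity. Qed.
End G.


Lemma sig_ext {I : Type} {T : I -> Type} {P : (forall i, T i) -> Prop} (x y : {f : forall i, T i | P f}) :
  (forall i, proj1_sig x i = proj1_sig y i) -> x = y.
Proof.
  destruct x as [x px], y as [y py]; simpl; intros H.
  assert (x = y) by (apply functional_extensionality_dep; exact H). subst.
  f_equal. apply proof_irrelevance.
Qed.

Section B.
Variables V W : MonData.
Hypotheses (hV : MonLaws V) (hW : MonLaws W).
Variable C : GData (prodM V (rev W)).
Hypothesis hC : GLaws C.
Let hR := revL hW.
Let LP : MonLaws (prodM V (rev W)) := prodL hV hR.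

Lemma uR_comp {X' Y' : mob W} {A B D : gob C} (g : ghom (underR C) Y' B D) (f : ghom (underR C) X' A B) :
  gcomp (underR C) g f = greind C ((mlu_inv (@munit V), mid (mtens (m := rev W) Y' X')) : mhom (m := prodM V (rev W)) (munit, mtens (m := rev W) Y' X') (mtens (m := prodM V (rev W)) (munit, Y') (munit, X'))) (gcomp C g f).
Proof. reflexivity. Qed.
Lemma uR_reind {X' Y' : mob W} (b : mhom Y' X') {A B : gob C} (f : ghom (underR C) X' A B) :
  greind (underR C) b f = greind C ((mid (@munit V), b) : mhom (m := prodM V (rev W)) (munit, Y') (munit, X')) f.
Proof. reflexivity. Qed.
Lemma uL_comp {X Y : mob V} {A B D : gob C} (g : ghom (underL C) Y B D) (f : ghom (underL C) X A B) :
  gcomp (underL C) g f = greind C ((mid (mtens Y X), mlu_inv (@munit W)) : mhom (m := prodM V (rev W)) (mtens Y X, munit) (mtens (m := prodM V (rev W)) (Y, munit) (X, munit))) (gcomp C g f).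
Proof. reflexivity. Qed.
Lemma uL_reind {X Y : mob V} (a : mhom Y X) {A B : gob C} (f : ghom (underL C) X A B) :
  greind (underL C) a f = greind C ((a, mid (@munit W)) : mhom (m := prodM V (rev W)) (Y, munit) (X, munit)) f.
Proof. reflexivity. Qed.

Lemma sq_eq (X : mob V) (X' : mob W) (A A' B B' : gob C)
    (f : ghom C (X, munit) A A') (g : ghom C (X, munit) B B')
    (phi : ghom C (munit, X') A B) (phi' : ghom C (munit, X') A' B') :
  bisquare f g phi phi' ->
  gcomp C g phi = greind C (mcomp ((mlu_inv X, mlu_inv X') : mhom (m := prodM V (rev W)) (X, X') (mtens (m := prodM V (rev W)) (munit, X') (X, munit))) ((mru X, mru X') : mhom (m := prodM V (rev W)) (mtens (m := prodM V (rev W)) (X, munit) (munit, X')) (X, X'))) (gcomp C phi' f).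
Proof.
  intros H. eapply (rmove hC). apply H. simpl. f_equal; apply (mru_iso1 hV) || apply (mru_iso1 hW).
Qed.

Lemma sqR_reind (X : mob V) (X' Y' : mob W) (b : mhom Y' X') (A A' B B' : gob C)
    (f : ghom C (X, munit) A A') (g : ghom C (X, munit) B B')
    (phi : ghom C (munit, X') A B) (phi' : ghom C (munit, X') A' B') :
  bisquare f g phi phi' ->
  bisquare f g (greind (underR C) b phi) (greind (underR C) b phi').
Proof.
  intros H. apply sq_eq in H. unfold bisquare. rewrite !uR_reind.
  rewrite (crr hC), (rr hC), H, (rr hC), (crl hC), (rr hC).
  apply (req C). simpl. f_equal.
  - rewrite !(tid hV), !(cid_l hV), <- (cA hV), (mru_iso2 hV), (cid_r hV). reflexivity.
  - rewrite <- (lu_inv_nat hW), <- (ru_inv_nat hW), <- (cA hW), (can hW) by apply (mru_iso2 hW). reflexivity.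
Qed.

Lemma sqR_id (X : mob V) (A A' : gob C) (f : ghom C (X, munit) A A') :
  bisquare f f (gid C A) (gid C A').
Proof.
  unfold bisquare. rewrite (cidr hC), (cidl hC), !(rr hC).
  apply (req C). simpl. f_equal.
  - rewrite (mru_iso2 hV), (mlu_iso2 hV). reflexivity.
  - rewrite (K3 hW), (mru_iso2 hW), <- (K3 hW), (mlu_iso2 hW). reflexivity.
Qed.

Lemma sqR_comp (X : mob V) (X' Y' : mob W) (A A' B B' D D' : gob C)
    (f : ghom C (X, munit) A A') (g : ghom C (X, munit) B B') (h : ghom C (X, munit) D D')
    (phi : ghom C (munit, X') A B) (phi' : ghom C (munit, X') A' B')
    (psi : ghom C (munit, Y') B D) (psi' : ghom C (munit, Y') B' D') :
  bisquare f g phi phi' -> bisquare g h psi psi' ->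
  bisquare f h (gcomp (underR C) psi phi) (gcomp (underR C) psi' phi').
Proof.
  intros H1 H2. apply sq_eq in H1. apply sq_eq in H2. unfold bisquare. rewrite !uR_comp.
  rewrite (crr hC), (rr hC). setoid_rewrite (cas' LP hC phi psi h). rewrite (rr hC).
  setoid_rewrite H2. rewrite (crl hC), (rr hC). setoid_rewrite (cas hC phi g psi'). rewrite (rr hC).
  setoid_rewrite H1. rewrite (crr hC), (rr hC). setoid_rewrite (cas' LP hC f phi' psi'). rewrite (rr hC).
  rewrite (crl hC), (rr hC).
  apply (req C). simpl. f_equal.
  - apply (VC1 hV).
  - apply (WC1 hW).
Qed.

Lemma uR_laws : GLaws (underR C).
Proof.
  constructor; intros; simpl.
  - exact (rid hC f).
  - rewrite (rr hC). apply (req C). simpl. rewrite (cid_l hV). reflexivity.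
  - setoid_rewrite (crr hC). setoid_rewrite (crl hC). rewrite !(rr hC). apply (req C). simpl. f_equal.
    + rewrite !(tid hV), !(cid_l hV), (cid_r hV). reflexivity.
    + rewrite (cid_r hW), (cid_l hW), <- (tc hW), (cid_l hW), (cid_r hW). reflexivity.
  - rewrite (crl hC), (crr hC), !(rr hC). apply (fin_cas hC f g h). simpl. f_equal.
    + rewrite (cA hV), (K1inv hV), (cid_r hV), (lu_inv_nat hV). reflexivity.
    + rewrite !(tid hW), !(cid_l hW), (cid_r hW). reflexivity.
  - setoid_rewrite (cidr hC). rewrite (rr hC). apply (req C). simpl. f_equal.
    + rewrite <- (K3 hV), (mlu_iso2 hV). reflexivity.
    + apply (cid_r hW).
  - setoid_rewrite (cidl hC). rewrite (rr hC). apply (req C). simpl. f_equal.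
    + rewrite (mlu_iso2 hV). reflexivity.
    + apply (cid_r hW).
Qed.

Lemma sqL_reind (X Y : mob V) (X' : mob W) (a : mhom Y X) (A A' B B' : gob C)
    (f : ghom C (X, munit) A A') (g : ghom C (X, munit) B B')
    (phi : ghom C (munit, X') A B) (phi' : ghom C (munit, X') A' B') :
  bisquare f g phi phi' ->
  bisquare (greind (underL C) a f) (greind (underL C) a g) phi phi'.
Proof.
  intros H. apply sq_eq in H. unfold bisquare. rewrite !uL_reind.
  rewrite (crl hC), (rr hC). setoid_rewrite H. rewrite (rr hC), (crr hC), (rr hC).
  apply (req C). simpl. f_equal.
  - rewrite <- (lu_inv_nat hV), <- (ru_inv_nat hV), <- (cA hV), (can hV) by apply (mru_iso2 hV). reflexivity.
  - rewrite !(tid hW), !(cid_l hW), <- (cA hW), (mru_iso2 hW), (cid_r hW). reflexivity.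
Qed.

Lemma sqL_id (X' : mob W) (A B : gob C) (p : ghom C (munit, X') A B) :
  bisquare (gid C A) (gid C B) p p.
Proof.
  unfold bisquare. rewrite (cidr hC), (cidl hC), !(rr hC).
  apply (req C). simpl. f_equal.
  - rewrite (K3 hV), (mru_iso2 hV), <- (K3 hV), (mlu_iso2 hV). reflexivity.
  - rewrite (mru_iso2 hW), (mlu_iso2 hW). reflexivity.
Qed.

Lemma sqL_comp (X Y : mob V) (X' : mob W) (A A' A'' B B' B'' : gob C)
    (f : ghom C (X, munit) A A') (g : ghom C (X, munit) B B')
    (f' : ghom C (Y, munit) A' A'') (g' : ghom C (Y, munit) B' B'')
    (p : ghom C (munit, X') A B) (q : ghom C (munit, X') A' B') (r : ghom C (munit, X') A'' B'') :
  bisquare f g p q -> bisquare f' g' q r ->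
  bisquare (gcomp (underL C) f' f) (gcomp (underL C) g' g) p r.
Proof.
  intros H1 H2. apply sq_eq in H1. apply sq_eq in H2. unfold bisquare. rewrite !uL_comp.
  rewrite (crl hC), (rr hC). setoid_rewrite (cas hC p g g'). rewrite (rr hC).
  setoid_rewrite H1. rewrite (crr hC), (rr hC). setoid_rewrite (cas' LP hC f q g'). rewrite (rr hC).
  setoid_rewrite H2. rewrite (crl hC), (rr hC). setoid_rewrite (cas hC f f' r). rewrite (rr hC).
  rewrite (crr hC), (rr hC).
  apply (req C). simpl. f_equal.
  - apply (WC1 hV).
  - apply (VC1 hW).
Qed.

Lemma uL_laws : GLaws (underL C).
Proof.
  constructor; intros; simpl.
  - exact (rid hC f).
  - rewrite (rr hC). apply (req C). simpl. rewrite (cid_l hW). reflexivity.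
  - setoid_rewrite (crr hC). setoid_rewrite (crl hC). rewrite !(rr hC). apply (req C). simpl. f_equal.
    + rewrite (cid_r hV), (cid_l hV), <- (tc hV), (cid_l hV), (cid_r hV). reflexivity.
    + rewrite !(tid hW), !(cid_l hW), (cid_r hW). reflexivity.
  - rewrite (crl hC), (crr hC), !(rr hC). apply (fin_cas hC f g h). simpl. f_equal.
    + rewrite !(tid hV), !(cid_l hV), (cid_r hV). reflexivity.
    + rewrite (cid_r hW), <- (lu_inv_nat hW), <- (K1inv hW), <- (cA hW), (can hW) by apply (massoc_iso1 hW). reflexivity.
  - setoid_rewrite (cidr hC). rewrite (rr hC). apply (req C). simpl. f_equal.
    + apply (cid_r hV).
    + apply (mlu_iso2 hW).
  - setoid_rewrite (cidl hC). rewrite (rr hC). apply (req C). simpl. f_equal.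
    + apply (cid_r hV).
    + rewrite <- (K3 hW). apply (mlu_iso2 hW).
Qed.

Lemma part1 (A : GData V) (hA : GLaws A) :
     exists S : GStruct (rev W) (GFun A (underL C))
                  (fun X' F G => GTrans C A F G X'),
       GStructLaws S
       /\ (forall (X' Y' : mob W) (F G K : GFun A (underL C))
             (psi : GTrans C A G K Y') (phi : GTrans C A F G X') (a : gob A),
             proj1_sig (scomp S psi phi) a
             = gcomp (underR C) (proj1_sig psi a) (proj1_sig phi a))
       /\ (forall (X' Y' : mob W) (beta : mhom Y' X') (F G : GFun A (underL C))
             (phi : GTrans C A F G X') (a : gob A),
             proj1_sig (sreind S beta phi) a
             = greind (underR C) beta (proj1_sig phi a))
       /\ (forall (F : GFun A (underL C)) (a : gob A),
             proj1_sig (sid S F) a = gid (underR C) (fob F a)).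
Proof.
  unshelve refine (ex_intro _ (@Build_GStruct (rev W) (GFun A (underL C)) (fun X' F G => GTrans C A F G X')
     (fun (X' Y' : mob (rev W)) (beta : mhom Y' X') (F G : GFun A (underL C)) (phi : GTrans C A F G X') =>
        (exist _ (fun a => greind (underR C) beta (proj1_sig phi a)) _ : GTrans C A F G Y'))
     (fun (X' Y' : mob (rev W)) (F G K : GFun A (underL C)) (psi : GTrans C A G K Y') (phi : GTrans C A F G X') =>
        (exist _ (fun a => gcomp (underR C) (proj1_sig psi a) (proj1_sig phi a)) _ : GTrans C A F K (mtens (m := rev W) Y' X')))
     (fun F : GFun A (underL C) => (exist _ (fun a => gid (underR C) (fob F a)) _ : GTrans C A F F munit))) _).
  - intros X a b f. apply sqR_reind. exact (proj2_sig phi X a b f).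
  - intros X a b f. eapply sqR_comp; [exact (proj2_sig phi X a b f) | exact (proj2_sig psi X a b f)].
  - intros X a b f. apply sqR_id.
  - split; [|split; [|split]]; try (intros; reflexivity).
    pose proof uR_laws as U.
    constructor; intros; apply sig_ext; intro; cbn [sreind scomp sid proj1_sig].
    + apply (reind_id U).
    + apply (reind_comp U).
    + apply (comp_reind U).
    + apply (comp_assoc U).
    + apply (comp_id_r U).
    + apply (comp_id_l U).
Qed.

Lemma part2 (B : GData (rev W)) (hB : GLaws B) :
     exists S : GStruct V (GFun B (underR C))
                  (fun X F G => GTransR C B F G X),
       GStructLaws S
       /\ (forall (X Y : mob V) (F G K : GFun B (underR C))
             (psi : GTransR C B G K Y) (phi : GTransR C B F G X) (b : gob B),
             proj1_sig (scomp S psi phi) b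
             = gcomp (underL C) (proj1_sig psi b) (proj1_sig phi b))
       /\ (forall (X Y : mob V) (alpha : mhom Y X) (F G : GFun B (underR C))
             (phi : GTransR C B F G X) (b : gob B),
             proj1_sig (sreind S alpha phi) b
             = greind (underL C) alpha (proj1_sig phi b))
       /\ (forall (F : GFun B (underR C)) (b : gob B),
             proj1_sig (sid S F) b = gid (underL C) (fob F b)).
Proof.
  unshelve refine (ex_intro _ (@Build_GStruct V (GFun B (underR C)) (fun X F G => GTransR C B F G X)
     (fun (X Y : mob V) (alpha : mhom Y X) (F G : GFun B (underR C)) (phi : GTransR C B F G X) =>
        (exist _ (fun b => greind (underL C) alpha (proj1_sig phi b)) _ : GTransR C B F G Y))
     (fun (X Y : mob V) (F G K : GFun B (underR C)) (psi : GTransR C B G K Y) (phi : GTransR C B F G X) =>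
        (exist _ (fun b => gcomp (underL C) (proj1_sig psi b) (proj1_sig phi b)) _ : GTransR C B F K (mtens Y X)))
     (fun F : GFun B (underR C) => (exist _ (fun b => gid (underL C) (fob F b)) _ : GTransR C B F F munit))) _).
  - intros X' a b g. apply sqL_reind. exact (proj2_sig phi X' a b g).
  - intros X' a b g. eapply sqL_comp; [exact (proj2_sig phi X' a b g) | exact (proj2_sig psi X' a b g)].
  - intros X' a b g. apply sqL_id.
  - split; [|split; [|split]]; try (intros; reflexivity).
    pose proof uL_laws as U.
    constructor; intros; apply sig_ext; intro; cbn [sreind scomp sid proj1_sig].
    + apply (reind_id U).
    + apply (reind_comp U).
    + apply (comp_reind U).
    + apply (comp_assoc U).
    + apply (comp_id_r U).
    + apply (comp_id_l U).
Qed.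
End B.

Unset Implicit Arguments.
Theorem theorem8p3 (V W : MonData) (hV : MonLaws V) (hW : MonLaws W)
    (C : GData (prodM V (rev W))) (hC : GLaws C) :
  (* (1) the right W-graded category  ^V[A, C]_W *)
  (forall A : GData V, GLaws A ->
     exists S : GStruct (rev W) (GFun A (underL C))
                  (fun X' F G => GTrans C A F G X'),
       GStructLaws S
       /\ (forall (X' Y' : mob W) (F G K : GFun A (underL C))
             (psi : GTrans C A G K Y') (phi : GTrans C A F G X') (a : gob A),
             proj1_sig (scomp S psi phi) a
             = gcomp (underR C) (proj1_sig psi a) (proj1_sig phi a))
       /\ (forall (X' Y' : mob W) (beta : mhom Y' X') (F G : GFun A (underL C))
             (phi : GTrans C A F G X') (a : gob A),
             proj1_sig (sreind S beta phi) a
             = greind (underR C) beta (proj1_sig phi a))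
       /\ (forall (F : GFun A (underL C)) (a : gob A),
             proj1_sig (sid S F) a = gid (underR C) (fob F a)))
  /\
  (* (2) the left V-graded category  _V[B, C]^W *)
  (forall B : GData (rev W), GLaws B ->
     exists S : GStruct V (GFun B (underR C))
                  (fun X F G => GTransR C B F G X),
       GStructLaws S
       /\ (forall (X Y : mob V) (F G K : GFun B (underR C))
             (psi : GTransR C B G K Y) (phi : GTransR C B F G X) (b : gob B),
             proj1_sig (scomp S psi phi) b
             = gcomp (underL C) (proj1_sig psi b) (proj1_sig phi b))
       /\ (forall (X Y : mob V) (alpha : mhom Y X) (F G : GFun B (underR C))
             (phi : GTransR C B F G X) (b : gob B),
             proj1_sig (sreind S alpha phi) b
             = greind (underL C) alpha (proj1_sig phi b))
       /\ (forall (F : GFun B (underR C)) (b : gob B),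
             proj1_sig (sid S F) b = gid (underL C) (fob F b))).
Proof.
  split; intros; [eapply part1 | eapply part2]; eassumption.
Qed.
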